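(* Consider the real ODE system $$\frac{dp}{dt}=p\,(pR(v_c)-Q(v_c)),\qquad \frac{dv_c}{dt}=-\frac{p}{4}(1+v_c^2)+\frac12(1-v_c^2),$$ with $R(v)=\frac12\left(\frac1v-v\right)$, $Q(v)=\frac12\left(\frac1v+v\right)$. Fix $c_1$ with $0<c_1<\frac{3+\sqrt{73}}{8}$ and let $p_1(v)=1+c_1H(v-1)(v-1)$, $p_2(v)=-1-c_1H(1-v)(v^{-1}-1)$ for $v>0$, where $H$ is the Heaviside function, and $\Omega=\{(v,p):v>0,\ p_2(v)\le p\le p_1(v)\}$. Then for every initial datum $(v_c(0),p(0))\in\Omega$ the solution exists for all $t>0$, satisfies $(v_c(t),p(t))\in\Omega$ for all $t>0$, $v_c(t)$ stays bounded away from $0$ and from $\infty$, and $p(t)\to0$ as $t\to\infty$.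
   Context: This system is the form, with dissipation coefficient normalized to $\nu=1$, of the pole-dynamics ODEs for the generalized Constantin–Lax–Majda equation with $a=1/2$, $\sigma=1$, written in the variable $p=\omega_{-2,i}/(v_c(1-v_c^2))$, where $v_c>0$ is the pole position parameter and $\omega_{-2,i}$ the real double-pole amplitude. *)

(* Defs.v *)
From Stdlib Require Import Reals Lra.
From Coquelicot Require Import Coquelicot.
Open Scope R_scope.

(* Heaviside function (value at 0 irrelevant here: it multiplies a factor vanishing at v = 1). *)
Definition Heaviside (x : R) : R := if Rle_dec 0 x then 1 else 0.

Definition Rf (v : R) : R := / 2 * (/ v - v).
Definition Qf (v : R) : R := / 2 * (/ v + v).

(* Right-hand sides of the ODE system (nu = 1, a = 1/2, sigma = 1). *)
Definition rhs_p (v p : R) : R := p * (p * Rf v - Qf v).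
Definition rhs_v (v p : R) : R := - (p / 4) * (1 + v ^ 2) + / 2 * (1 - v ^ 2).

Definition p1 (c1 v : R) : R := 1 + c1 * Heaviside (v - 1) * (v - 1).
Definition p2 (c1 v : R) : R := - 1 - c1 * Heaviside (1 - v) * (/ v - 1).

Definition Omega (c1 v p : R) : Prop := 0 < v /\ p2 c1 v <= p /\ p <= p1 c1 v.

(* Main.v *)
Require Import Defs.
From Stdlib Require Import Reals Lra Lia Psatz Classical.
From Coquelicot Require Import Coquelicot.
Open Scope R_scope.

Lemma lip_cont (f : R -> R) (L x : R) :
  (forall y, Rabs (f y - f x) <= L * Rabs (y - x)) -> continuous f x.
Proof.
  intros H. apply filterlim_locally. intros eps.
  assert (HL : 0 < Rabs L + 1) by (pose proof (Rabs_pos L); lra).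
  assert (Hd : 0 < eps / (Rabs L + 1)) by (apply Rdiv_lt_0_compat; [apply cond_pos|lra]).
  exists (mkposreal _ Hd). intros y Hy.
  change (Rabs (y - x) < eps / (Rabs L + 1)) in Hy.
  change (Rabs (f y - f x) < eps).
  eapply Rle_lt_trans. apply H.
  apply Rle_lt_trans with (Rabs L * Rabs (y - x)).
  apply Rmult_le_compat_r. apply Rabs_pos. apply RRle_abs.
  apply Rle_lt_trans with ((Rabs L + 1) * Rabs (y - x)).
  pose proof (Rabs_pos (y-x)); nra.
  apply Rmult_lt_reg_r with (/ (Rabs L + 1)). apply Rinv_0_lt_compat; lra.
  replace ((Rabs L + 1) * Rabs (y - x) * / (Rabs L + 1)) with (Rabs (y-x)) by (field; lra).
  exact Hy.
Qed.

Lemma ex_RInt_cont (f : R -> R) a b : (forall x, continuous f x) -> ex_RInt f a b.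
Proof. intros H. apply (ex_RInt_continuous (V:=R_CompleteNormedModule)). intros; apply H. Qed.

Lemma RInt_lip (h : R -> R) (C a b : R) :
  (forall x, continuous h x) -> (forall x, Rabs (h x) <= C) ->
  Rabs (RInt h 0 a - RInt h 0 b) <= C * Rabs (a - b).
Proof.
  intros Hc Hb.
  assert (key : forall a b, a <= b -> Rabs (RInt h 0 a - RInt h 0 b) <= C * Rabs (a - b)).
  { intros a' b' Hab.
    rewrite <- (RInt_Chasles h 0 a' b') by (apply ex_RInt_cont; auto).
    change (plus (RInt h 0 a') (RInt h a' b')) with (RInt h 0 a' + RInt h a' b').
    replace (RInt h 0 a' - (RInt h 0 a' + RInt h a' b')) with (- RInt h a' b') by ring.
    rewrite Rabs_Ropp.
    eapply Rle_trans. apply abs_RInt_le_const; auto. apply ex_RInt_cont; auto.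
    rewrite Rabs_left1 by lra. lra. }
  destruct (Rle_dec a b). auto.
  rewrite Rabs_minus_sym. rewrite (Rabs_minus_sym a b). apply key; lra.
Qed.

Definition Ev (t : R) (P : R -> Prop) := exists d, 0 < d /\ forall s, t < s < t + d -> P s.

Lemma Ev_and t P Q : Ev t P -> Ev t Q -> Ev t (fun s => P s /\ Q s).
Proof.
  intros [d1 [H1 P1]] [d2 [H2 P2]]. exists (Rmin d1 d2). split.
  apply Rmin_pos; auto. intros s Hs. pose proof (Rmin_l d1 d2); pose proof (Rmin_r d1 d2).
  split; [apply P1|apply P2]; lra.
Qed.

Lemma Ev_impl t (P Q : R -> Prop) : (forall s, P s -> Q s) -> Ev t P -> Ev t Q.
Proof. intros H [d [Hd HP]]. exists d; split; auto. Qed.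

Lemma der_pos_ev f t d : is_derive f t d -> 0 < d -> Ev t (fun s => f t < f s).
Proof.
  intros H Hd. apply is_derive_Reals in H.
  destruct (H (d/2)) as [del Hdel]. lra.
  exists del. split. apply cond_pos. intros s Hs.
  assert (Hh : s - t <> 0) by lra.
  assert (Ha : Rabs (s - t) < del) by (rewrite Rabs_right; lra).
  specialize (Hdel _ Hh Ha). replace (t + (s - t)) with s in Hdel by ring.
  apply Rabs_def2 in Hdel. destruct Hdel as [_ Hl].
  assert (Hq : d / 2 < (f s - f t) / (s - t)) by lra.
  apply Rmult_lt_compat_r with (r := s - t) in Hq; [|lra].
  replace ((f s - f t) / (s - t) * (s - t)) with (f s - f t) in Hq by (field; lra). nra.
Qed.

Lemma der_neg_ev f t d : is_derive f t d -> d < 0 -> Ev t (fun s => f s < f t).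
Proof.
  intros H Hd.
  assert (H' : is_derive (fun s => - f s) t (- d)).
  { apply (is_derive_opp f t d H). }
  apply der_pos_ev in H'; [|lra]. eapply Ev_impl; [|exact H']. simpl; intros; lra.
Qed.

Lemma der_cont_ev f t d : is_derive f t d -> forall eps, 0 < eps -> Ev t (fun s => Rabs (f s - f t) < eps).
Proof.
  intros H eps He. apply is_derive_Reals in H.
  destruct (H 1) as [del Hdel]. lra.
  exists (Rmin del (eps / (Rabs d + 1))). split.
  apply Rmin_pos. apply cond_pos. apply Rdiv_lt_0_compat; auto. pose proof (Rabs_pos d); lra.
  intros s Hs. pose proof (Rmin_l del (eps / (Rabs d + 1))). pose proof (Rmin_r del (eps / (Rabs d + 1))).
  assert (Hh : s - t <> 0) by lra.
  assert (Ha : Rabs (s - t) < del) by (rewrite Rabs_right; lra).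
  specialize (Hdel _ Hh Ha). replace (t + (s - t)) with s in Hdel by ring.
  set (q := (f s - f t) / (s - t)) in *.
  assert (Hq : f s - f t = q * (s - t)) by (unfold q; field; lra).
  rewrite Hq, Rabs_mult, (Rabs_right (s-t)) by lra.
  assert (Rabs q < Rabs d + 1).
  { pose proof (Rabs_triang (q - d) d). replace (q - d + d) with q in H2 by ring. lra. }
  assert (Hdp : 0 < Rabs d + 1) by (pose proof (Rabs_pos d); lra).
  assert (s - t < eps / (Rabs d + 1)) by lra.
  apply Rle_lt_trans with ((Rabs d + 1) * (s - t)).
  apply Rmult_le_compat_r; lra.
  apply Rmult_lt_reg_r with (/ (Rabs d + 1)). apply Rinv_0_lt_compat; lra.
  replace ((Rabs d + 1) * (s - t) * / (Rabs d + 1)) with (s - t) by (field; lra).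
  unfold Rdiv in H3. rewrite Rmult_comm. lra.
Qed.

Lemma der_gt_ev f t d c : is_derive f t d -> c < f t -> Ev t (fun s => c < f s).
Proof.
  intros H Hc. destruct (der_cont_ev f t d H (f t - c)) as [del [Hd P]]. lra.
  exists del; split; auto. intros s Hs. specialize (P s Hs). apply Rabs_def2 in P. lra.
Qed.

Lemma der_lt_ev f t d c : is_derive f t d -> f t < c -> Ev t (fun s => f s < c).
Proof.
  intros H Hc. destruct (der_cont_ev f t d H (c - f t)) as [del [Hd P]]. lra.
  exists del; split; auto. intros s Hs. specialize (P s Hs). apply Rabs_def2 in P. lra.
Qed.

Lemma lim_bound (u : nat -> R) (l a B : R) :
  is_lim_seq u l -> (forall k, Rabs (a - u k) <= B) -> Rabs (a - l) <= B.
Proof.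
  intros Hl Hk. destruct (Rle_dec (Rabs (a - l)) B) as [h|h]; auto. exfalso.
  apply is_lim_seq_spec in Hl.
  assert (He : 0 < Rabs (a - l) - B) by lra.
  destruct (Hl (mkposreal _ He)) as [N HN]. specialize (HN N (le_n N)). simpl in HN.
  specialize (Hk N). pose proof (Rabs_triang (a - u N) (u N - l)).
  replace (a - u N + (u N - l)) with (a - l) in H by ring. lra.
Qed.

Lemma lim_geom (a : nat -> R) (l D : R) :
  (forall n, Rabs (a n - l) <= D * (1/2)^n) -> is_lim_seq a l.
Proof.
  intros H.
  apply is_lim_seq_le_le with (u := fun n => l - D * (1/2)^n) (w := fun n => l + D * (1/2)^n).
  intros n; specialize (H n); apply Rabs_le_between in H; lra.
  all: cycle 1.
  replace (Finite l) with (Finite (l + D * 0)) by (f_equal; ring).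
  apply is_lim_seq_plus'. apply is_lim_seq_const.
  apply (is_lim_seq_scal_l _ D 0). apply is_lim_seq_geom. rewrite Rabs_right; lra.
  replace (Finite l) with (Finite (l - D * 0)) by (f_equal; ring).
  apply is_lim_seq_minus'. apply is_lim_seq_const.
  apply (is_lim_seq_scal_l _ D 0). apply is_lim_seq_geom. rewrite Rabs_right; lra.
Qed.

Definition dd (x y : R * R) := Rabs (fst x - fst y) + Rabs (snd x - snd y).

Section Picard.
Variables (g1 g2 : R * R -> R) (C L : R) (x0 : R * R).
Hypothesis HC : 0 <= C.
Hypothesis HL : 0 < L.
Hypothesis Hb1 : forall x, Rabs (g1 x) <= C.
Hypothesis Hb2 : forall x, Rabs (g2 x) <= C.
Hypothesis Hl1 : forall x y, Rabs (g1 x - g1 y) <= L * dd x y.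
Hypothesis Hl2 : forall x y, Rabs (g2 x - g2 y) <= L * dd x y.

Lemma pm (a b : R) : a + b - a = b. Proof. ring. Qed.
Lemma pmpm (a b c : R) : a + b - (a + c) = b - c. Proof. ring. Qed.

Fixpoint X (n : nat) : R -> R * R :=
  match n with
  | O => fun _ => x0
  | S k => fun t => (fst x0 + RInt (fun s => g1 (X k s)) 0 (Rmax 0 t),
                     snd x0 + RInt (fun s => g2 (X k s)) 0 (Rmax 0 t))
  end.

Lemma comp_cont (g : R * R -> R) (Y : R -> R * R) K :
  (forall x y, Rabs (g x - g y) <= L * dd x y) ->
  (forall t t', dd (Y t) (Y t') <= K * Rabs (t - t')) ->
  forall t, continuous (fun s => g (Y s)) t.
Proof.
  intros Hg HY t. apply (lip_cont _ (L * K)). intros y.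
  eapply Rle_trans. apply Hg. rewrite Rmult_assoc. apply Rmult_le_compat_l; [lra|]. apply HY.
Qed.

Lemma Rmax_lip a b : Rabs (Rmax 0 a - Rmax 0 b) <= Rabs (a - b).
Proof. unfold Rmax; destruct (Rle_dec 0 a); destruct (Rle_dec 0 b);
  repeat (try unfold Rabs; destruct Rcase_abs); lra. Qed.

Lemma X_lip n : forall t t', dd (X n t) (X n t') <= (2 * C) * Rabs (t - t').
Proof.
  induction n; intros t t'; simpl.
  - unfold dd. rewrite !Rminus_diag, Rabs_R0. pose proof (Rabs_pos (t - t')). nra.
  - unfold dd; simpl.
    replace (fst x0 + RInt (fun s : R => g1 (X n s)) 0 (Rmax 0 t) -
      (fst x0 + RInt (fun s : R => g1 (X n s)) 0 (Rmax 0 t'))) with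
      (RInt (fun s : R => g1 (X n s)) 0 (Rmax 0 t) - RInt (fun s : R => g1 (X n s)) 0 (Rmax 0 t')) by ring.
    replace (snd x0 + RInt (fun s : R => g2 (X n s)) 0 (Rmax 0 t) -
      (snd x0 + RInt (fun s : R => g2 (X n s)) 0 (Rmax 0 t'))) with
      (RInt (fun s : R => g2 (X n s)) 0 (Rmax 0 t) - RInt (fun s : R => g2 (X n s)) 0 (Rmax 0 t')) by ring.
    pose proof (RInt_lip (fun s => g1 (X n s)) C (Rmax 0 t) (Rmax 0 t') (comp_cont g1 _ _ Hl1 IHn) (fun x => Hb1 _)).
    pose proof (RInt_lip (fun s => g2 (X n s)) C (Rmax 0 t) (Rmax 0 t') (comp_cont g2 _ _ Hl2 IHn) (fun x => Hb2 _)).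
    pose proof (Rmax_lip t t'). nra.
Qed.

Lemma X_max n t : X n t = X n (Rmax 0 t).
Proof. destruct n; simpl; auto. f_equal; f_equal; f_equal;
  unfold Rmax; repeat destruct Rle_dec; lra. Qed.

Ltac req := lazymatch goal with |- ?a = ?b => change (@eq R a b) end.

Definition c := 4 * L.
Definition K := 2 * C / c.

Lemma RInt_exp (A t : R) : RInt (fun s => A * exp (c * s)) 0 t = A * (exp (c * t) - 1) / c.
Proof.
  assert (Hc : c <> 0) by (unfold c; lra).
  assert (H := is_RInt_derive (V:=R_CompleteNormedModule) (fun s => A * exp (c * s) / c)
     (fun s => A * exp (c * s)) 0 t).
  assert (H1 : is_RInt (fun s => A * exp (c * s)) 0 t (A * exp (c * t) / c - A * exp (c * 0) / c)).
  { apply H.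
  - intros x _. auto_derive; auto. field; auto.
  - intros x _. apply (ex_derive_continuous (V:=R_NormedModule)). auto_derive; auto. }
  apply (is_RInt_unique (V:=R_CompleteNormedModule)) in H1. rewrite H1. rewrite Rmult_0_r, exp_0. lazymatch goal with |- ?a = ?b => change (@eq R a b) end. field; auto.
Qed.

Lemma bound_int (h w : R -> R) T :
  0 <= T -> (forall s, continuous h s) -> (forall s, continuous w s) ->
  (forall s, 0 <= s <= T -> Rabs (h s) <= w s) -> Rabs (RInt h 0 T) <= RInt w 0 T.
Proof.
  intros HT Hh Hw Hhw. eapply Rle_trans. apply abs_RInt_le; auto. apply ex_RInt_cont; auto.
  apply RInt_le; auto.
  apply ex_RInt_cont. intros s. apply (continuous_comp h Rabs). auto.
  apply (lip_cont _ 1). intros y; rewrite Rmult_1_l; apply Rabs_triang_inv2.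
  apply ex_RInt_cont; auto. intros; apply Hhw; lra.
Qed.

Lemma Delta n t : 0 <= t -> dd (X (S n) t) (X n t) <= K * exp (c * t) * (1/2)^n.
Proof.
  assert (Hc : 0 < c) by (unfold c; lra).
  revert t. induction n; intros t Ht.
  - simpl. unfold dd; simpl. rewrite Rmax_right by lra.
    set (r1 := RInt (fun _ : R => g1 x0) 0 t). set (r2 := RInt (fun _ : R => g2 x0) 0 t).
    rewrite !pm.
    pose proof (abs_RInt_le_const (fun _ => g1 x0) 0 t C Ht (ex_RInt_const _ _ _) (fun _ _ => Hb1 x0)).
    pose proof (abs_RInt_le_const (fun _ => g2 x0) 0 t C Ht (ex_RInt_const _ _ _) (fun _ _ => Hb2 x0)).
    pose proof (exp_ineq1_le (c * t)).
    unfold K. rewrite Rmult_1_r.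
    replace (2 * C / c * exp (c * t)) with (2 * C * (exp (c * t) / c)) by (field; lra).
    assert (t <= exp (c * t) / c).
    { apply Rmult_le_reg_r with c; auto. replace (exp (c * t) / c * c) with (exp (c*t)) by (field; lra). nra. }
    fold r1 r2 in H, H0. assert (t * C <= exp (c * t) / c * C) by (apply Rmult_le_compat_r; auto). nra.
  - assert (Hcont : forall m s, continuous (fun s => g1 (X m s)) s /\ continuous (fun s => g2 (X m s)) s).
    { intros m s; split; eapply comp_cont; eauto; apply X_lip. }
    change (X (S (S n)) t) with (fst x0 + RInt (fun s => g1 (X (S n) s)) 0 (Rmax 0 t),
                     snd x0 + RInt (fun s => g2 (X (S n) s)) 0 (Rmax 0 t)).
    change (X (S n) t) with (fst x0 + RInt (fun s => g1 (X n s)) 0 (Rmax 0 t),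
                     snd x0 + RInt (fun s => g2 (X n s)) 0 (Rmax 0 t)).
    rewrite Rmax_right by lra. unfold dd; cbn [fst snd]. rewrite !pmpm.
    assert (E1 : forall g, (forall x y, Rabs (g x - g y) <= L * dd x y) ->
      RInt (fun s => g (X (S n) s) - g (X n s)) 0 t = RInt (fun s => g (X (S n) s)) 0 t - RInt (fun s => g (X n s)) 0 t).
    { intros g Hg. apply (RInt_minus (V:=R_CompleteNormedModule)); apply ex_RInt_cont; intros; eapply comp_cont; eauto; apply X_lip. }
    rewrite <- (E1 g1 Hl1), <- (E1 g2 Hl2).
    assert (Hw : forall s, continuous (fun s => (L * K * (1/2)^n) * exp (c * s)) s).
    { intros s. apply (ex_derive_continuous (V:=R_NormedModule)). auto_derive; auto. }
    assert (Hmc : forall g, (forall x y, Rabs (g x - g y) <= L * dd x y) ->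
       forall s, continuous (fun s => g (X (S n) s) - g (X n s)) s).
    { intros g Hg s. apply (continuous_minus (V:=R_NormedModule)); eapply comp_cont; eauto; apply X_lip. }
    assert (Hpt : forall g, (forall x y, Rabs (g x - g y) <= L * dd x y) ->
       Rabs (RInt (fun s => g (X (S n) s) - g (X n s)) 0 t) <= RInt (fun s => (L * K * (1/2)^n) * exp (c * s)) 0 t).
    { intros g Hg. apply bound_int; auto. intros s Hs.
      eapply Rle_trans. apply Hg. rewrite !Rmult_assoc. apply Rmult_le_compat_l; [lra|].
      replace (K * ((1/2)^n * exp (c * s))) with (K * exp (c * s) * (1/2)^n) by ring. apply IHn; lra. }
    pose proof (Hpt g1 Hl1). pose proof (Hpt g2 Hl2).
    rewrite RInt_exp in H, H0.
    assert (L * K * (1 / 2) ^ n * (exp (c * t) - 1) / c <= K * exp (c * t) * (1/2)^(S n) / 2).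
    { unfold c. simpl. unfold K. unfold c.
      replace (L * (2 * C / (4 * L)) * (1 / 2) ^ n * (exp (4 * L * t) - 1) / (4 * L)) with
        ((2 * C / (4 * L)) * (1/2)^n * (exp (4 * L * t) - 1) / 4) by (field; lra).
      assert (0 <= 2 * C / (4 * L) * (1/2)^n). { apply Rmult_le_pos. apply Rdiv_le_0_compat; lra. apply pow_le; lra. }
      assert (0 < exp (4 * L * t)) by apply exp_pos. nra. }
    lra.
Qed.

Lemma exp_mono x y : x <= y -> exp x <= exp y.
Proof. intros H; destruct (Rle_lt_or_eq_dec _ _ H). left; apply exp_increasing; auto. subst; lra. Qed.

Lemma half_bd k : 0 <= (1/2)^k <= 1.
Proof. induction k; simpl; lra. Qed.

Lemma half_mono N k : (1/2)^(N + k) <= (1/2)^N.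
Proof. rewrite pow_add. pose proof (half_bd N); pose proof (half_bd k); nra. Qed.

Lemma pow_succ_half m : (1/2)^(S m) = 1/2 * (1/2)^m.
Proof. reflexivity. Qed.

Definition B t n := 2 * K * exp (c * Rmax 0 t) * (1/2)^n.

Lemma K_pos : 0 <= K.
Proof. unfold K, c. apply Rdiv_le_0_compat; lra. Qed.

Lemma Delta' n t : dd (X (S n) t) (X n t) <= K * exp (c * Rmax 0 t) * (1/2)^n.
Proof. rewrite (X_max (S n) t), (X_max n t). apply Delta. apply Rmax_l. Qed.

Lemma dd_tri x y z : dd x z <= dd x y + dd y z.
Proof. unfold dd. pose proof (Rabs_triang (fst x - fst y) (fst y - fst z)).
  pose proof (Rabs_triang (snd x - snd y) (snd y - snd z)).
  replace (fst x - fst y + (fst y - fst z)) with (fst x - fst z) in H by ring.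
  replace (snd x - snd y + (snd y - snd z)) with (snd x - snd z) in H0 by ring. lra. Qed.

Lemma dd_sym x y : dd x y = dd y x.
Proof. unfold dd. rewrite (Rabs_minus_sym (fst x)), (Rabs_minus_sym (snd x)). auto. Qed.

Lemma cauchy n k t : dd (X n t) (X (n + k) t) <= B t n - B t (n + k).
Proof.
  induction k.
  - rewrite Nat.add_0_r. unfold dd. rewrite !Rminus_diag, Rabs_R0. lra.
  - rewrite Nat.add_succ_r. eapply Rle_trans. apply (dd_tri _ (X (n + k) t)).
    rewrite (dd_sym (X (n+k) t)). pose proof (Delta' (n + k) t).
    unfold B in *. rewrite (pow_succ_half (n+k)). set (A := exp (c * Rmax 0 t)) in *. set (h := (1/2)^(n+k)) in *.
    set (h0 := (1/2)^n) in *. nra.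
Qed.

Lemma B_bound n k t : dd (X n t) (X (n + k) t) <= B t n.
Proof. pose proof (cauchy n k t). unfold B in *. pose proof K_pos. pose proof (exp_pos (c * Rmax 0 t)).
  pose proof (half_bd (n + k)). assert (0 <= K * exp (c * Rmax 0 t)) by nra. nra. Qed.

Lemma B_small t eps : 0 < eps -> exists N, B t N < eps.
Proof.
  intros He. pose proof (is_lim_seq_geom (1/2)) as G.
  assert (Rabs (1/2) < 1) by (rewrite Rabs_right; lra). specialize (G H).
  apply is_lim_seq_spec in G.
  set (A := 2 * K * exp (c * Rmax 0 t)).
  assert (HA : 0 <= A) by (unfold A; pose proof K_pos; pose proof (exp_pos (c * Rmax 0 t)); nra).
  assert (He' : 0 < eps / (A + 1)) by (apply Rdiv_lt_0_compat; lra).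
  destruct (G (mkposreal _ He')) as [N HN]. exists N. specialize (HN N (le_n _)). simpl in HN.
  rewrite Rminus_0_r, Rabs_right in HN by (apply Rle_ge, half_bd).
  unfold B; fold A. apply Rle_lt_trans with ((A + 1) * (1/2)^N).
  pose proof (half_bd N); nra.
  apply Rmult_lt_reg_r with (/ (A + 1)). apply Rinv_0_lt_compat; lra.
  replace ((A + 1) * (1 / 2) ^ N * / (A + 1)) with ((1/2)^N) by (field; lra). exact HN.
Qed.

Lemma conv_gen (pr : R * R -> R) t :
  (forall x y, Rabs (pr x - pr y) <= dd x y) ->
  exists l : R, is_lim_seq (fun n => pr (X n t)) l.
Proof.
  intros Hpr. apply ex_lim_seq_cauchy_corr. intros eps.
  destruct (B_small t eps (cond_pos eps)) as [N HN]. exists N. intros n m Hn Hm.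
  assert (forall n m, (N <= n)%nat -> (n <= m)%nat -> Rabs (pr (X n t) - pr (X m t)) < eps).
  { clear n m Hn Hm. intros n m Hn Hm. replace m with (n + (m - n))%nat by lia.
    eapply Rle_lt_trans. apply Hpr. eapply Rle_lt_trans. apply B_bound.
    eapply Rle_lt_trans; [|exact HN]. unfold B.
    replace n with (N + (n - N))%nat by lia. pose proof (half_mono N (n - N)).
    pose proof K_pos. pose proof (exp_pos (c * Rmax 0 t)). assert (0 <= K * exp (c * Rmax 0 t)) by nra. nra. }
  destruct (Nat.le_ge_cases n m). auto. rewrite Rabs_minus_sym. auto.
Qed.

Lemma pr1 x y : Rabs (fst x - fst y) <= dd x y.
Proof. unfold dd; pose proof (Rabs_pos (snd x - snd y)); lra. Qed.
Lemma pr2 x y : Rabs (snd x - snd y) <= dd x y.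
Proof. unfold dd; pose proof (Rabs_pos (fst x - fst y)); lra. Qed.

Definition xl t := (real (Lim_seq (fun n => fst (X n t))), real (Lim_seq (fun n => snd (X n t)))).

Lemma conv1 t : is_lim_seq (fun n => fst (X n t)) (fst (xl t)).
Proof. destruct (conv_gen fst t pr1) as [l Hl]. simpl. rewrite (is_lim_seq_unique _ _ Hl). exact Hl. Qed.
Lemma conv2 t : is_lim_seq (fun n => snd (X n t)) (snd (xl t)).
Proof. destruct (conv_gen snd t pr2) as [l Hl]. simpl. rewrite (is_lim_seq_unique _ _ Hl). exact Hl. Qed.

Lemma lim_bound2 (u w : nat -> R) (l m a b Bd : R) :
  is_lim_seq u l -> is_lim_seq w m -> (forall k, Rabs (a - u k) + Rabs (b - w k) <= Bd) ->
  Rabs (a - l) + Rabs (b - m) <= Bd.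
Proof.
  intros Hl Hm Hk. destruct (Rle_dec (Rabs (a - l) + Rabs (b - m)) Bd) as [h|h]; auto. exfalso.
  apply is_lim_seq_spec in Hl. apply is_lim_seq_spec in Hm.
  assert (He : 0 < (Rabs (a - l) + Rabs (b - m) - Bd) / 2) by lra.
  destruct (Hl (mkposreal _ He)) as [N1 HN1]. destruct (Hm (mkposreal _ He)) as [N2 HN2].
  specialize (HN1 (N1 + N2)%nat ltac:(lia)). specialize (HN2 (N1 + N2)%nat ltac:(lia)). simpl in HN1, HN2.
  specialize (Hk (N1 + N2)%nat).
  pose proof (Rabs_triang (a - u (N1+N2)%nat) (u (N1+N2)%nat - l)).
  pose proof (Rabs_triang (b - w (N1+N2)%nat) (w (N1+N2)%nat - m)).
  replace (a - u (N1+N2)%nat + (u (N1+N2)%nat - l)) with (a - l) in H by ring.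
  replace (b - w (N1+N2)%nat + (w (N1+N2)%nat - m)) with (b - m) in H0 by ring. lra.
Qed.

Lemma convB n t : dd (X n t) (xl t) <= B t n.
Proof.
  unfold dd. apply lim_bound2 with (u := fun k => fst (X (k + n) t)) (w := fun k => snd (X (k + n) t)).
  apply (is_lim_seq_incr_n (fun k => fst (X k t))). apply conv1.
  apply (is_lim_seq_incr_n (fun k => snd (X k t))). apply conv2.
  intros k. rewrite Nat.add_comm. apply B_bound.
Qed.

Lemma xl_lip t t' : dd (xl t) (xl t') <= (2 * C) * Rabs (t - t').
Proof.
  assert (H := lim_bound2 (fun k => fst (X k t) - fst (X k t')) (fun k => snd (X k t) - snd (X k t'))
     (fst (xl t) - fst (xl t')) (snd (xl t) - snd (xl t')) 0 0 (2 * C * Rabs (t - t'))).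
  unfold dd. rewrite !Rminus_0_l, !Rabs_Ropp in H. apply H.
  apply is_lim_seq_minus'; [apply conv1|apply conv1].
  apply is_lim_seq_minus'; [apply conv2|apply conv2].
  intros k. rewrite !Rminus_0_l, !Rabs_Ropp. apply X_lip.
Qed.

Lemma xl_cont (g : R * R -> R) : (forall x y, Rabs (g x - g y) <= L * dd x y) ->
  forall t, continuous (fun s => g (xl s)) t.
Proof. intros Hg. apply (comp_cont g xl (2 * C) Hg xl_lip). Qed.

Lemma fix_gen (g : R * R -> R) (pr : R * R -> R) (gi : nat -> R -> R) t :
  (forall x y, Rabs (g x - g y) <= L * dd x y) ->
  (forall n s, gi n s = g (X n s)) ->
  is_lim_seq (fun n => pr (X (S n) t)) (pr (xl t)) ->
  (forall n, pr (X (S n) t) = pr x0 + RInt (gi n) 0 (Rmax 0 t)) ->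
  pr (xl t) = pr x0 + RInt (fun s => g (xl s)) 0 (Rmax 0 t).
Proof.
  intros Hg Hgi Hlim Hn. set (T := Rmax 0 t).
  assert (HT : 0 <= T) by apply Rmax_l.
  assert (H2 : is_lim_seq (fun n => pr (X (S n) t)) (pr x0 + RInt (fun s => g (xl s)) 0 T)).
  { apply lim_geom with (D := T * (L * (2 * K * exp (c * T)))). intros n. rewrite Hn. fold T.
    rewrite pmpm.
    assert (E : RInt (gi n) 0 T - RInt (fun s => g (xl s)) 0 T = RInt (fun s => gi n s - g (xl s)) 0 T).
    { symmetry. apply (RInt_minus (V:=R_CompleteNormedModule)); apply ex_RInt_cont; intros.
      eapply continuous_ext. intros; symmetry; apply Hgi. eapply comp_cont; eauto; apply X_lip.
      apply xl_cont; auto. }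
    rewrite E. eapply Rle_trans. apply abs_RInt_le_const; auto.
    apply ex_RInt_cont; intros. apply (continuous_minus (V:=R_NormedModule)).
      eapply continuous_ext. intros; symmetry; apply Hgi. eapply comp_cont; eauto; apply X_lip.
      apply xl_cont; auto.
    intros s Hs. rewrite Hgi. eapply Rle_trans. apply Hg. instantiate (1 := L * (2 * K * exp (c * T)) * (1/2)^n).
    rewrite Rmult_assoc. apply Rmult_le_compat_l; [lra|]. eapply Rle_trans. apply convB. unfold B.
    rewrite Rmax_right by lra. pose proof K_pos. pose proof (half_bd n).
    assert (exp (c * s) <= exp (c * T)). { apply exp_mono. unfold c. nra. }
    apply Rmult_le_compat_r; [lra|]. apply Rmult_le_compat_l; [lra|exact H1].
    rewrite Rminus_0_r. right. ring. }
  apply is_lim_seq_unique in Hlim. apply is_lim_seq_unique in H2. rewrite Hlim in H2. injection H2. auto.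
Qed.

Lemma xl_fix t : xl t = (fst x0 + RInt (fun s => g1 (xl s)) 0 (Rmax 0 t),
                         snd x0 + RInt (fun s => g2 (xl s)) 0 (Rmax 0 t)).
Proof.
  rewrite (surjective_pairing (xl t)). f_equal.
  - apply (fix_gen g1 fst (fun n s => g1 (X n s))); auto.
    apply (is_lim_seq_incr_1 (fun n => fst (X n t))). apply conv1.
  - apply (fix_gen g2 snd (fun n s => g2 (X n s))); auto.
    apply (is_lim_seq_incr_1 (fun n => snd (X n t))). apply conv2.
Qed.

Definition z t := (fst x0 + RInt (fun s => g1 (xl s)) 0 t, snd x0 + RInt (fun s => g2 (xl s)) 0 t).

Lemma z_eq t : 0 <= t -> z t = xl t.
Proof. intros Ht. rewrite xl_fix, Rmax_right by lra. reflexivity. Qed.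

Lemma der_prim (h : R -> R) a t : (forall s, continuous h s) ->
  is_derive (fun s => a + RInt h 0 s) t (h t).
Proof.
  intros Hc.
  assert (H : is_derive (fun s => RInt h 0 s) t (h t)).
  { apply (is_derive_RInt (V:=R_CompleteNormedModule) h (fun s => RInt h 0 s) 0 t).
    apply filter_forall. intros b. apply (RInt_correct (V:=R_CompleteNormedModule)). apply ex_RInt_cont; auto.
    apply Hc. }
  assert (H2 := is_derive_plus (K:=R_AbsRing) (V:=R_NormedModule) _ _ t _ _ (is_derive_const a t) H).
  rewrite plus_zero_l in H2. exact H2.
Qed.

Lemma z_der1 t : is_derive (fun s => fst (z s)) t (g1 (xl t)).
Proof. apply (der_prim (fun s => g1 (xl s))). apply xl_cont; auto. Qed.
Lemma z_der2 t : is_derive (fun s => snd (z s)) t (g2 (xl t)).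
Proof. apply (der_prim (fun s => g2 (xl s))). apply xl_cont; auto. Qed.

Lemma z_0 : z 0 = x0.
Proof. unfold z. rewrite !(RInt_point (V:=R_CompleteNormedModule)). simpl.
  rewrite !Rplus_0_r. destruct x0; auto. Qed.

End Picard.

Section Box.
Variables (m M P : R).
Hypothesis Hm : 0 < m.
Hypothesis HmM : m <= M.
Hypothesis HP : 0 <= P.

Definition inbox a b := m <= a <= M /\ -P <= b <= P.
Definition LB (f : R -> R -> R) := exists Lf Bf, 0 <= Lf /\ forall a b a' b', inbox a b -> inbox a' b' ->
  Rabs (f a b) <= Bf /\ Rabs (f a b - f a' b') <= Lf * (Rabs (a - a') + Rabs (b - b')).

Lemma LB_const k : LB (fun _ _ => k).
Proof. exists 0, (Rabs k). split; [lra|]. intros. split; [lra|]. rewrite Rminus_diag, Rabs_R0.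
  pose proof (Rabs_pos (a - a')); pose proof (Rabs_pos (b - b')); lra. Qed.

Lemma LB_fst : LB (fun a _ => a).
Proof. exists 1, M. split; [lra|]. intros a b a' b' [H1 _] [H2 _]. split.
  rewrite Rabs_right; lra. pose proof (Rabs_pos (b - b')); lra. Qed.

Lemma LB_snd : LB (fun _ b => b).
Proof. exists 1, P. split; [lra|]. intros a b a' b' [_ H1] [_ H2]. split.
  apply Rabs_le; lra. pose proof (Rabs_pos (a - a')); lra. Qed.

Lemma LB_inv : LB (fun a _ => / a).
Proof. exists (/ (m * m)), (/ m). split. left; apply Rinv_0_lt_compat; nra.
  intros a b a' b' [H1 _] [H2 _]. split.
  rewrite Rabs_right. apply Rinv_le_contravar; lra. apply Rle_ge; left; apply Rinv_0_lt_compat; lra.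
  replace (/ a - / a') with ((a' - a) / (a * a')) by (field; lra).
  unfold Rdiv; rewrite Rabs_mult, Rabs_minus_sym, (Rabs_right (/ (a * a'))).
  2: apply Rle_ge; left; apply Rinv_0_lt_compat; nra.
  assert (/ (a * a') <= / (m * m)) by (apply Rinv_le_contravar; nra).
  pose proof (Rabs_pos (a - a')); pose proof (Rabs_pos (b - b')).
  assert (0 <= / (m*m)) by (left; apply Rinv_0_lt_compat; nra). nra.
Qed.

Lemma LB_plus f g : LB f -> LB g -> LB (fun a b => f a b + g a b).
Proof.
  intros [L1 [B1 [HL1 H1]]] [L2 [B2 [HL2 H2]]]. exists (L1 + L2), (B1 + B2). split; [lra|].
  intros a b a' b' Ha Ha'. destruct (H1 _ _ _ _ Ha Ha') as [A1 A2]. destruct (H2 _ _ _ _ Ha Ha') as [A3 A4].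
  split. eapply Rle_trans. apply Rabs_triang. lra.
  replace (f a b + g a b - (f a' b' + g a' b')) with ((f a b - f a' b') + (g a b - g a' b')) by ring.
  eapply Rle_trans. apply Rabs_triang. lra.
Qed.

Lemma LB_mult f g : LB f -> LB g -> LB (fun a b => f a b * g a b).
Proof.
  intros [L1 [B1 [HL1 H1]]] [L2 [B2 [HL2 H2]]]. exists (Rabs B1 * L2 + Rabs B2 * L1), (B1 * B2).
  split. pose proof (Rabs_pos B1); pose proof (Rabs_pos B2); nra.
  intros a b a' b' Ha Ha'. destruct (H1 _ _ _ _ Ha Ha') as [A1 A2]. destruct (H2 _ _ _ _ Ha Ha') as [A3 A4].
  destruct (H2 _ _ _ _ Ha' Ha) as [A5 _].
  pose proof (Rabs_pos (f a b)); pose proof (Rabs_pos (g a' b')).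
  split. rewrite Rabs_mult. apply Rmult_le_compat; [exact H | apply Rabs_pos | exact A1 | exact A3].
  replace (f a b * g a b - f a' b' * g a' b') with (f a b * (g a b - g a' b') + g a' b' * (f a b - f a' b')) by ring.
  eapply Rle_trans. apply Rabs_triang. rewrite !Rabs_mult.
  set (D := Rabs (a - a') + Rabs (b - b')) in *.
  assert (Rabs (f a b) <= Rabs B1) by (eapply Rle_trans; [exact A1| apply RRle_abs]).
  assert (Rabs (g a' b') <= Rabs B2) by (eapply Rle_trans; [exact A5| apply RRle_abs]).
  pose proof (Rabs_pos (g a b - g a' b')). pose proof (Rabs_pos (f a b - f a' b')).
  assert (Rabs (f a b) * Rabs (g a b - g a' b') <= Rabs B1 * (L2 * D)) by (apply Rmult_le_compat; auto).
  assert (Rabs (g a' b') * Rabs (f a b - f a' b') <= Rabs B2 * (L1 * D)) by (apply Rmult_le_compat; auto).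
  lra.
Qed.

Lemma LB_ext f g : LB f -> (forall a b, f a b = g a b) -> LB g.
Proof. intros [L1 [B1 [HL1 H1]]] E. exists L1, B1. split; auto. intros. rewrite <- !E. auto. Qed.

Definition cl lo hi x := Rmax lo (Rmin hi x).

Lemma cl_in lo hi x : lo <= hi -> lo <= cl lo hi x <= hi.
Proof. intros; unfold cl, Rmax, Rmin; repeat destruct Rle_dec; lra. Qed.
Lemma cl_id lo hi x : lo <= x <= hi -> cl lo hi x = x.
Proof. intros; unfold cl, Rmax, Rmin; repeat destruct Rle_dec; lra. Qed.
Lemma cl_lip lo hi x y : lo <= hi -> Rabs (cl lo hi x - cl lo hi y) <= Rabs (x - y).
Proof. intros; unfold cl, Rmax, Rmin; repeat destruct Rle_dec; unfold Rabs; repeat destruct Rcase_abs; lra. Qed.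

Lemma LB_glob f : LB f -> exists Lf Bf, 0 <= Lf /\ 0 <= Bf /\
  forall x y, Rabs (f (cl m M (fst x)) (cl (-P) P (snd x))) <= Bf /\
    Rabs (f (cl m M (fst x)) (cl (-P) P (snd x)) - f (cl m M (fst y)) (cl (-P) P (snd y))) <= Lf * dd x y.
Proof.
  intros [L1 [B1 [HL1 H1]]]. exists L1, (Rabs B1). split; auto. split; [apply Rabs_pos|].
  intros x y.
  assert (Hx : inbox (cl m M (fst x)) (cl (-P) P (snd x))) by (split; apply cl_in; lra).
  assert (Hy : inbox (cl m M (fst y)) (cl (-P) P (snd y))) by (split; apply cl_in; lra).
  destruct (H1 _ _ _ _ Hx Hy) as [A1 A2]. split.
  eapply Rle_trans; [exact A1|apply RRle_abs].
  eapply Rle_trans; [exact A2|]. apply Rmult_le_compat_l; auto. unfold dd.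
  pose proof (cl_lip m M (fst x) (fst y) HmM). assert (-P <= P) by lra.
  pose proof (cl_lip (-P) P (snd x) (snd y) H0). lra.
Qed.
End Box.

Lemma fneg c x : 0 < c -> 4*c*c - 3*c - 4 < 0 -> 0 < x ->
  (2*c-4) + (2*c*c+4*c-8)*x + (4*c*c-3*c-4)*x^2 - (c*c+3*c)*x^3 - c*c*x^4 < 0.
Proof.
  intros Hc H2 Hx.
  assert (c < 3/2) by nra.
  assert (0 < x^2) by nra. assert (0 < x^3) by (simpl; nra). assert (0 < x^4) by (simpl; nra).
  assert ((4*c*c-3*c-4)*x^2 < 0) by nra.
  assert (0 < c*c*x^4) by (apply Rmult_lt_0_compat; [nra|auto]).
  destruct (Rle_dec (c*c + 2*c - 4) 0).
  - assert (Hn : 2*c*c+4*c-8 <= 0) by lra. assert (Hm: (2*c*c+4*c-8)*x <= 0*x) by (apply Rmult_le_compat_r; lra). assert (0 <= (c*c+3*c)*x^3) by (apply Rmult_le_pos; nra). lra.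
  - assert (4 <= c*c + 3*c) by nra.
    assert (4 * x^3 <= (c*c+3*c)*x^3) by (apply Rmult_le_compat_r; lra).
    assert (2*c*c+4*c-8 <= 2) by nra.
    assert ((2*c*c+4*c-8)*x <= 2 * x) by nra.
    assert (0 <= 4*x^3 - 2*x + 1).
    { replace (4*x^3 - 2*x + 1) with ((2*x-1)^2*(x+1) + x) by ring. assert (0 <= (2*x-1)^2) by (apply pow2_ge_0). nra. }
    lra.
Qed.

Lemma p1_eq c1 v : p1 c1 v = 1 + c1 * Rmax 0 (v - 1).
Proof. unfold p1, Heaviside, Rmax. destruct (Rle_dec 0 (v-1)); destruct (Rle_dec 0 (v - 1)); try lra; ring. Qed.

Lemma p2_eq c1 v : 0 < v -> p2 c1 v = -1 - c1 * Rmax 0 (/ v - 1).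
Proof.
  intros Hv. unfold p2, Heaviside, Rmax. destruct (Rle_dec 0 (1 - v)); destruct (Rle_dec 0 (/ v - 1)).
  - ring.
  - exfalso. apply n. assert (1 <= / v). { rewrite <- Rinv_1. apply Rinv_le_contravar; lra. } lra.
  - exfalso. assert (/ v < 1). { rewrite <- Rinv_1. apply Rinv_lt_contravar; lra. } lra.
  - ring.
Qed.

Lemma c1_quad c1 : 0 < c1 < (3 + sqrt 73) / 8 -> 4 * c1 * c1 - 3 * c1 - 4 < 0.
Proof.
  intros [H1 H2]. assert (Hs : 8 * c1 - 3 < sqrt 73) by lra.
  pose proof (sqrt_lt_R0 73 ltac:(lra)). pose proof (sqrt_sqrt 73 ltac:(lra)).
  destruct (Rle_dec 0 (8 * c1 - 3)). nra. nra.
Qed.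

Lemma key1 c a : 0 < c -> 4*c*c - 3*c - 4 < 0 -> 1 < a ->
  rhs_p a (1 + c * (a - 1)) - c * rhs_v a (1 + c * (a - 1)) < 0.
Proof.
  intros Hc Hq Ha.
  assert (E : rhs_p a (1 + c * (a - 1)) - c * rhs_v a (1 + c * (a - 1)) =
     ((2*c-4) + (2*c*c+4*c-8)*(a-1) + (4*c*c-3*c-4)*(a-1)^2 - (c*c+3*c)*(a-1)^3 - c*c*(a-1)^4) / (4 * a)).
  { unfold rhs_p, rhs_v, Rf, Qf. field. lra. }
  rewrite E. unfold Rdiv. assert (0 < / (4 * a)) by (apply Rinv_0_lt_compat; lra).
  match goal with |- ?f * _ < 0 => assert (f < 0) by (apply fneg; auto; lra) end. nra.
Qed.

Lemma key2 c a : 0 < c -> 4*c*c - 3*c - 4 < 0 -> 0 < a < 1 ->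
  0 < rhs_p a (-1 - c * (/ a - 1)) + c * (- rhs_v a (-1 - c * (/ a - 1)) / a ^ 2).
Proof.
  intros Hc Hq Ha.
  assert (Hw : 1 < / a). { rewrite <- Rinv_1. apply Rinv_lt_contravar; lra. }
  pose proof (key1 c (/ a) Hc Hq Hw).
  assert (E : rhs_p a (-1 - c * (/ a - 1)) + c * (- rhs_v a (-1 - c * (/ a - 1)) / a ^ 2) =
     - (rhs_p (/ a) (1 + c * (/ a - 1)) - c * rhs_v (/ a) (1 + c * (/ a - 1)))).
  { unfold rhs_p, rhs_v, Rf, Qf. field. lra. }
  rewrite E. lra.
Qed.

Lemma picard_exists (g1 g2 : R * R -> R) (x0 : R * R) :
  (exists C L, 0 <= C /\ 0 < L /\ (forall x, Rabs (g1 x) <= C) /\ (forall x, Rabs (g2 x) <= C) /\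
     (forall x y, Rabs (g1 x - g1 y) <= L * dd x y) /\ (forall x y, Rabs (g2 x - g2 y) <= L * dd x y)) ->
  exists w : R -> R * R, w 0 = x0 /\ forall t, 0 <= t ->
    is_derive (fun s => fst (w s)) t (g1 (w t)) /\ is_derive (fun s => snd (w s)) t (g2 (w t)).
Proof.
  intros [C [L [HC [HL [Hb1 [Hb2 [Hl1 Hl2]]]]]]].
  exists (z g1 g2 x0). split. apply z_0. intros t Ht.
  rewrite (z_eq g1 g2 C L x0 HC HL Hb1 Hb2 Hl1 Hl2 t Ht). split.
  apply (z_der1 g1 g2 C L x0 HC HL Hb1 Hb2 Hl1 Hl2).
  apply (z_der2 g1 g2 C L x0 HC HL Hb1 Hb2 Hl1 Hl2).
Qed.

Ltac lbt Hm := repeat first [apply LB_plus | apply LB_mult | (apply LB_inv; exact Hm) | (apply LB_fst; exact Hm) | apply LB_snd | apply LB_const].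

Lemma LB_rhs_v m M P : 0 < m -> LB m M P (fun a b => rhs_v a b).
Proof.
  intros Hm.
  apply LB_ext with (fun a b => (-(/4)) * b * (1 + a * a) + /2 * (1 + (-1) * (a * a))).
  lbt Hm.
  intros a b. unfold rhs_v. simpl. field.
Qed.

Lemma LB_rhs_p m M P : 0 < m -> LB m M P (fun a b => rhs_p a b).
Proof.
  intros Hm.
  apply LB_ext with (fun a b => b * (b * (/2 * (/ a + (-1) * a)) + (-1) * (/2 * (/ a + a)))).
  lbt Hm.
  intros a b. unfold rhs_p, Rf, Qf. ring.
Qed.

Lemma der_eq (f : R -> R) (x l l' : R) : is_derive f x l -> l = l' -> is_derive f x l'.
Proof. intros H E; subst; auto. Qed.

Lemma der_lin (f g : R -> R) t df dg k : is_derive f t df -> is_derive g t dg ->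
  is_derive (fun s => f s - k * (g s - 1)) t (df - k * dg).
Proof.
  intros Hf Hg.
  assert (H1 : is_derive (fun s => g s - 1) t (dg - 0)).
  { apply (is_derive_minus (K:=R_AbsRing) (V:=R_NormedModule) g (fun _ => 1) t dg 0 Hg).
    apply (is_derive_const (K:=R_AbsRing) (V:=R_NormedModule)). }
  apply is_derive_scal with (k := k) in H1.
  pose proof (is_derive_minus (K:=R_AbsRing) (V:=R_NormedModule) _ _ t _ _ Hf H1) as H2.
  eapply der_eq. exact H2. unfold minus, plus, opp; simpl. ring.
Qed.

Lemma der_invc (f g : R -> R) t df dg k : is_derive f t df -> is_derive g t dg -> g t <> 0 ->
  is_derive (fun s => f s + k * (/ g s - 1)) t (df + k * (- dg / (g t)^2)).
Proof.
  intros Hf Hg Hn.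
  assert (H0 := is_derive_inv g t dg Hg Hn).
  assert (H1 : is_derive (fun s => / g s - 1) t (- dg / (g t)^2 - 0)).
  { apply (is_derive_minus (K:=R_AbsRing) (V:=R_NormedModule) (fun s => / g s) (fun _ => 1) t _ 0 H0).
    apply (is_derive_const (K:=R_AbsRing) (V:=R_NormedModule)). }
  apply is_derive_scal with (k := k) in H1.
  pose proof (is_derive_plus (K:=R_AbsRing) (V:=R_NormedModule) _ _ t _ _ Hf H1) as H2.
  eapply der_eq. exact H2. unfold plus; simpl. ring.
Qed.

Lemma cont2 f t d : is_derive f t d -> forall eps, 0 < eps ->
  exists del, 0 < del /\ forall s, Rabs (s - t) < del -> Rabs (f s - f t) < eps.
Proof.
  intros H eps He. apply is_derive_Reals in H.
  destruct (H 1) as [del Hdel]. lra.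
  exists (Rmin del (eps / (Rabs d + 1))). split.
  apply Rmin_pos. apply cond_pos. apply Rdiv_lt_0_compat; auto. pose proof (Rabs_pos d); lra.
  intros s Hs. pose proof (Rmin_l del (eps / (Rabs d + 1))). pose proof (Rmin_r del (eps / (Rabs d + 1))).
  destruct (Req_dec s t) as [E|Hh']. subst. rewrite Rminus_diag, Rabs_R0. auto.
  assert (Hh : s - t <> 0) by lra.
  assert (Ha : Rabs (s - t) < del) by lra.
  specialize (Hdel _ Hh Ha). replace (t + (s - t)) with s in Hdel by ring.
  set (q := (f s - f t) / (s - t)) in *.
  assert (Hq : f s - f t = q * (s - t)) by (unfold q; field; lra).
  rewrite Hq, Rabs_mult.
  assert (Rabs q < Rabs d + 1).
  { pose proof (Rabs_triang (q - d) d). replace (q - d + d) with q in H2 by ring. lra. }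
  assert (Hdp : 0 < Rabs d + 1) by (pose proof (Rabs_pos d); lra).
  assert (Rabs (s - t) < eps / (Rabs d + 1)) by lra.
  apply Rle_lt_trans with ((Rabs d + 1) * Rabs (s - t)).
  apply Rmult_le_compat_r. apply Rabs_pos. lra.
  apply Rmult_lt_reg_r with (/ (Rabs d + 1)). apply Rinv_0_lt_compat; lra.
  replace ((Rabs d + 1) * Rabs (s - t) * / (Rabs d + 1)) with (Rabs (s - t)) by (field; lra).
  unfold Rdiv in H3. rewrite Rmult_comm. lra.
Qed.

Lemma closed_gen (F : R -> R -> R) Lf s0 (vv pp : R -> R) dv dp :
  0 < s0 -> 0 <= Lf -> is_derive vv s0 dv -> is_derive pp s0 dp ->
  (forall r, 0 <= r < s0 -> F (vv r) (pp r) <= 0) ->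
  (forall r, 0 <= r < s0 -> Rabs (F (vv r) (pp r) - F (vv s0) (pp s0)) <= Lf * (Rabs (vv r - vv s0) + Rabs (pp r - pp s0))) ->
  F (vv s0) (pp s0) <= 0.
Proof.
  intros Hs Hl Dv Dp Hle Hlip. destruct (Rle_dec (F (vv s0) (pp s0)) 0) as [h|h]; auto. exfalso.
  set (g := F (vv s0) (pp s0)) in *.
  assert (He : 0 < g / (2 * (Lf + 1))) by (apply Rdiv_lt_0_compat; lra).
  destruct (cont2 vv s0 dv Dv _ He) as [d1 [Hd1 P1]].
  destruct (cont2 pp s0 dp Dp _ He) as [d2 [Hd2 P2]].
  set (r := s0 - Rmin (Rmin d1 d2) s0 / 2).
  assert (0 < Rmin (Rmin d1 d2) s0) by (repeat apply Rmin_pos; auto).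
  pose proof (Rmin_l (Rmin d1 d2) s0). pose proof (Rmin_r (Rmin d1 d2) s0).
  pose proof (Rmin_l d1 d2). pose proof (Rmin_r d1 d2).
  assert (Hr : 0 <= r < s0) by (unfold r; lra).
  assert (Rabs (r - s0) < d1) by (unfold r; rewrite Rabs_left; lra).
  assert (Rabs (r - s0) < d2) by (unfold r; rewrite Rabs_left; lra).
  specialize (P1 r H4). specialize (P2 r H5). specialize (Hle r Hr). specialize (Hlip r Hr).
  assert (Rabs (vv r - vv s0) + Rabs (pp r - pp s0) < 2 * (g / (2 * (Lf + 1)))) by lra.
  assert (Lf * (Rabs (vv r - vv s0) + Rabs (pp r - pp s0)) <= Lf * (2 * (g / (2 * (Lf + 1))))) by nra.
  assert (Lf * (2 * (g / (2 * (Lf + 1)))) < g).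
  { replace (Lf * (2 * (g / (2 * (Lf + 1))))) with (g * (Lf / (Lf + 1))) by (field; lra).
    assert (Lf / (Lf + 1) < 1). { apply Rmult_lt_reg_r with (Lf + 1). lra.
      replace (Lf / (Lf + 1) * (Lf + 1)) with Lf by (field; lra). lra. }
    nra. }
  apply Rabs_le_between in Hlip. lra.
Qed.

Section Main.
Variables (c1 v0 p0 : R).
Hypothesis hc1 : 0 < c1 < (3 + sqrt 73) / 8.
Hypothesis h0 : Omega c1 v0 p0.

Definition mm := Rmin v0 (1/2).
Definition MM := Rmax v0 2.
Definition PP := 1 + c1 * (MM + / mm).

Lemma mm_facts : 0 < mm /\ mm <= 1/2 /\ mm <= v0 /\ 2 <= MM /\ v0 <= MM.
Proof.
  destruct h0 as [Hv _]. unfold mm, MM.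
  split. apply Rmin_glb_lt; lra. split. apply Rmin_r. split. apply Rmin_l. split. apply Rmax_r. apply Rmax_l.
Qed.

Definition g1 x := rhs_v (cl mm MM (fst x)) (cl (-PP) PP (snd x)).
Definition g2 x := rhs_p (cl mm MM (fst x)) (cl (-PP) PP (snd x)).

Definition inK a b := mm <= a <= MM /\ p2 c1 a <= b <= p1 c1 a.

Lemma PP_pos : 0 <= PP.
Proof. pose proof mm_facts. unfold PP. assert (0 < / mm) by (apply Rinv_0_lt_compat; lra). nra. Qed.

Lemma inK_box a b : inK a b -> mm <= a <= MM /\ -PP <= b <= PP.
Proof.
  intros [Ha [Hb1 Hb2]]. pose proof mm_facts. split; auto.
  assert (0 < a) by lra. rewrite p1_eq in Hb2. rewrite p2_eq in Hb1 by lra.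
  assert (/ a <= / mm) by (apply Rinv_le_contravar; lra).
  assert (0 < / mm) by (apply Rinv_0_lt_compat; lra).
  assert (Rmax 0 (a - 1) <= MM) by (apply Rmax_lub; lra).
  assert (Rmax 0 (/ a - 1) <= / mm) by (apply Rmax_lub; lra).
  unfold PP. split; nra.
Qed.

Lemma g_K a b : inK a b -> g1 (a, b) = rhs_v a b /\ g2 (a, b) = rhs_p a b.
Proof.
  intros H. destruct (inK_box a b H) as [H1 H2]. unfold g1, g2; simpl.
  rewrite !cl_id by lra. auto.
Qed.

Lemma sol_exists : exists w : R -> R * R, w 0 = (v0, p0) /\ forall t, 0 <= t ->
    is_derive (fun s => fst (w s)) t (g1 (w t)) /\ is_derive (fun s => snd (w s)) t (g2 (w t)).
Proof.
  apply picard_exists. pose proof mm_facts. pose proof PP_pos.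
  assert (HmM : mm <= MM) by lra.
  destruct (LB_glob mm MM PP HmM PP_pos _ (LB_rhs_v mm MM PP ltac:(lra))) as [L1 [B1 [HL1 [HB1 H1]]]].
  destruct (LB_glob mm MM PP HmM PP_pos _ (LB_rhs_p mm MM PP ltac:(lra))) as [L2 [B2 [HL2 [HB2 H2]]]].
  exists (B1 + B2), (L1 + L2 + 1). split; [lra|]. split; [lra|].
  assert (forall x, 0 <= dd x x) by (intros; unfold dd; pose proof (Rabs_pos 0); rewrite !Rminus_diag; lra).
  repeat split; intros x; try intros y.
  - destruct (H1 x x); unfold g1; lra.
  - destruct (H2 x x); unfold g2; lra.
  - destruct (H1 x y). unfold g1. assert (0 <= dd x y) by (unfold dd; pose proof (Rabs_pos (fst x - fst y)); pose proof (Rabs_pos (snd x - snd y)); lra). nra.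
  - destruct (H2 x y). unfold g2. assert (0 <= dd x y) by (unfold dd; pose proof (Rabs_pos (fst x - fst y)); pose proof (Rabs_pos (snd x - snd y)); lra). nra.
Qed.

Section Sol.
Variable w : R -> R * R.
Hypothesis Hw0 : w 0 = (v0, p0).
Hypothesis Hder : forall t, 0 <= t ->
    is_derive (fun s => fst (w s)) t (g1 (w t)) /\ is_derive (fun s => snd (w s)) t (g2 (w t)).

Lemma local t0 : 0 <= t0 -> inK (fst (w t0)) (snd (w t0)) -> Ev t0 (fun s => inK (fst (w s)) (snd (w s))).
Proof.
  intros Ht HK. destruct (Hder t0 Ht) as [Dv Dp].
  rewrite (surjective_pairing (w t0)) in Dv, Dp.
  destruct (g_K _ _ HK) as [E1 E2]. rewrite E1 in Dv. rewrite E2 in Dp.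
  set (vv := fun s => fst (w s)) in *. set (pp := fun s => snd (w s)) in *.
  change (fst (w t0)) with (vv t0) in *. change (snd (w t0)) with (pp t0) in *.
  set (a := vv t0) in *. set (b := pp t0) in *.
  pose proof mm_facts as [Hm0 [Hm1 [Hm2 [HM1 HM2]]]].
  destruct HK as [[Ha1 Ha2] [Hb1 Hb2]].
  assert (Hapos : 0 < a) by lra.
  rewrite p1_eq in Hb2. rewrite p2_eq in Hb1 by lra.
  assert (Hq := c1_quad c1 hc1). destruct hc1 as [Hc Hc'].
  assert (Ev1 : Ev t0 (fun s => mm <= vv s)).
  { destruct (Rle_lt_or_eq_dec _ _ Ha1) as [h|h].
    - eapply Ev_impl; [|exact (der_gt_ev vv t0 _ mm Dv h)]. simpl; intros; lra.
    - assert (Hd : 0 < rhs_v a b).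
      { rewrite Rmax_left in Hb2 by lra. unfold rhs_v. nra. }
      eapply Ev_impl; [|exact (der_pos_ev vv t0 _ Dv Hd)]. simpl. intros s Hs. fold a in Hs. lra. }
  assert (Ev2 : Ev t0 (fun s => vv s <= MM)).
  { destruct (Rle_lt_or_eq_dec _ _ Ha2) as [h|h].
    - eapply Ev_impl; [|exact (der_lt_ev vv t0 _ MM Dv h)]. simpl; intros; lra.
    - assert (Hd : rhs_v a b < 0).
      { assert (/ a <= 1). { rewrite <- Rinv_1. apply Rinv_le_contravar; lra. }
        rewrite Rmax_left in Hb1 by lra. unfold rhs_v. nra. }
      eapply Ev_impl; [|exact (der_neg_ev vv t0 _ Dv Hd)]. simpl. intros s Hs. fold a in Hs. lra. }
  assert (Ev3 : Ev t0 (fun s => pp s <= p1 c1 (vv s))).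
  { destruct (Rle_dec a 1) as [h|h].
    - rewrite Rmax_left in Hb2 by lra.
      assert (Ev t0 (fun s => pp s < 1)).
      { destruct (Rle_lt_or_eq_dec b 1) as [h'|h']. lra.
        - exact (der_lt_ev pp t0 _ 1 Dp h').
        - assert (Hd : rhs_p a b < 0). { rewrite h'. unfold rhs_p, Rf, Qf.
            replace (1 * (1 * (/ 2 * (/ a - a)) - / 2 * (/ a + a))) with (- a) by (field; lra). lra. }
          eapply Ev_impl; [|exact (der_neg_ev pp t0 _ Dp Hd)]. simpl. intros s Hs. fold b in Hs. lra. }
      eapply Ev_impl; [|exact H]. simpl. intros s Hs. rewrite p1_eq.
      pose proof (Rmax_l 0 (vv s - 1)). nra.
    - rewrite Rmax_right in Hb2 by lra.
      pose proof (der_lin pp vv t0 _ _ c1 Dp Dv) as Dphi.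
      assert (Ev t0 (fun s => pp s - c1 * (vv s - 1) < 1)).
      { destruct (Rle_lt_or_eq_dec (pp t0 - c1 * (vv t0 - 1)) 1) as [h'|h']. fold a b. lra.
        - exact (der_lt_ev _ t0 _ 1 Dphi h').
        - assert (Hb : b = 1 + c1 * (a - 1)) by (fold a b in h'; lra).
          assert (Hd : rhs_p a b - c1 * rhs_v a b < 0). { rewrite Hb. apply key1; auto. lra. }
          eapply Ev_impl; [|exact (der_neg_ev _ t0 _ Dphi Hd)]. simpl. intros s Hs. rewrite h' in Hs. lra. }
      eapply Ev_impl; [|exact H]. simpl. intros s Hs. rewrite p1_eq.
      pose proof (Rmax_r 0 (vv s - 1)). nra. }
  assert (Ev4 : Ev t0 (fun s => 0 < vv s -> p2 c1 (vv s) <= pp s)).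
  { destruct (Rle_dec 1 a) as [h|h].
    - assert (/ a <= 1). { rewrite <- Rinv_1. apply Rinv_le_contravar; lra. }
      rewrite Rmax_left in Hb1 by lra.
      assert (Ev t0 (fun s => -1 < pp s)).
      { destruct (Rle_lt_or_eq_dec (-1) b) as [h'|h']. lra.
        - exact (der_gt_ev pp t0 _ (-1) Dp h').
        - assert (Hd : 0 < rhs_p a b). { rewrite <- h'. unfold rhs_p, Rf, Qf.
            replace (-1 * (-1 * (/ 2 * (/ a - a)) - / 2 * (/ a + a))) with (/ a) by (field; lra).
            apply Rinv_0_lt_compat; lra. }
          eapply Ev_impl; [|exact (der_pos_ev pp t0 _ Dp Hd)]. simpl. intros s Hs. fold b in Hs. lra. }
      eapply Ev_impl; [|exact H0]. simpl. intros s Hs Hv. rewrite p2_eq by auto.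
      pose proof (Rmax_l 0 (/ vv s - 1)). nra.
    - assert (1 <= / a). { rewrite <- Rinv_1. apply Rinv_le_contravar; lra. }
      rewrite Rmax_right in Hb1 by lra.
      pose proof (der_invc pp vv t0 _ _ c1 Dp Dv ltac:(fold a; lra)) as Dpsi.
      assert (Ev t0 (fun s => -1 < pp s + c1 * (/ vv s - 1))).
      { destruct (Rle_lt_or_eq_dec (-1) (pp t0 + c1 * (/ vv t0 - 1))) as [h'|h']. fold a b. lra.
        - exact (der_gt_ev _ t0 _ (-1) Dpsi h').
        - assert (Hb : b = -1 - c1 * (/ a - 1)) by (fold a b in h'; lra).
          assert (Hd : 0 < rhs_p a b + c1 * (- rhs_v a b / a ^ 2)). { rewrite Hb. apply key2; auto. lra. }
          eapply Ev_impl; [|exact (der_pos_ev _ t0 _ Dpsi Hd)]. simpl. intros s Hs. rewrite <- h' in Hs. lra. }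
      eapply Ev_impl; [|exact H0]. simpl. intros s Hs Hv. rewrite p2_eq by auto.
      pose proof (Rmax_r 0 (/ vv s - 1)). nra. }
  pose proof (Ev_and _ _ _ (Ev_and _ _ _ Ev1 Ev2) (Ev_and _ _ _ Ev3 Ev4)) as HE.
  eapply Ev_impl; [|exact HE]. simpl. intros s [[H1 H2] [H3 H4]].
  split. split; auto. split; auto. apply H4. lra.
Qed.

Lemma K0 : inK (fst (w 0)) (snd (w 0)).
Proof. rewrite Hw0. simpl. pose proof mm_facts. destruct h0 as [_ [H1 H2]]. split; [lra|auto]. Qed.

Lemma der_v t : 0 <= t -> is_derive (fun s => fst (w s)) t (g1 (w t)).
Proof. intros; apply Hder; auto. Qed.
Lemma der_p t : 0 <= t -> is_derive (fun s => snd (w s)) t (g2 (w t)).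
Proof. intros; apply Hder; auto. Qed.

Lemma invariance t : 0 <= t -> inK (fst (w t)) (snd (w t)).
Proof.
  intros HT. apply NNPP. intros HnK.
  set (E := fun s => 0 <= s <= t /\ forall r, 0 <= r <= s -> inK (fst (w r)) (snd (w r))).
  assert (HE0 : E 0). { split. lra. intros r Hr. replace r with 0 by lra. apply K0. }
  assert (Hb : bound E) by (exists t; intros s [Hs _]; lra).
  destruct (completeness E Hb (ex_intro _ 0 HE0)) as [ss [Hub Hlub]].
  assert (Hss0 : 0 <= ss) by (apply Hub; auto).
  assert (HssT : ss <= t) by (apply Hlub; intros s [Hs _]; lra).
  assert (HA : forall r, 0 <= r < ss -> inK (fst (w r)) (snd (w r))).
  { intros r Hr. apply NNPP. intros Hn.
    assert (is_upper_bound E r).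
    { intros s Hs. destruct (Rle_dec s r) as [h|h]; auto. exfalso. apply Hn. apply Hs. lra. }
    specialize (Hlub r H). lra. }
  assert (HB : inK (fst (w ss)) (snd (w ss))).
  { destruct (Rle_lt_or_eq_dec 0 ss Hss0) as [hs|hs]; [|rewrite <- hs; apply K0].
    pose proof (der_v ss Hss0) as Dv. pose proof (der_p ss Hss0) as Dp.
    pose proof mm_facts as [Hm0 [Hm1 [Hm2 [HM1 HM2]]]].
    assert (C1 : mm - fst (w ss) <= 0).
    { apply (closed_gen (fun a b => mm - a) 1 ss (fun s => fst (w s)) (fun s => snd (w s)) _ _ hs ltac:(lra) Dv Dp).
      intros r Hr. destruct (HA r Hr) as [[? ?] _]. simpl. lra.
      intros r Hr. simpl. replace (mm - fst (w r) - (mm - fst (w ss))) with (- (fst (w r) - fst (w ss))) by ring.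
      rewrite Rabs_Ropp. pose proof (Rabs_pos (snd (w r) - snd (w ss))). lra. }
    assert (C2 : fst (w ss) - MM <= 0).
    { apply (closed_gen (fun a b => a - MM) 1 ss (fun s => fst (w s)) (fun s => snd (w s)) _ _ hs ltac:(lra) Dv Dp).
      intros r Hr. destruct (HA r Hr) as [[? ?] _]. simpl. lra.
      intros r Hr. simpl. replace (fst (w r) - MM - (fst (w ss) - MM)) with (fst (w r) - fst (w ss)) by ring.
      pose proof (Rabs_pos (snd (w r) - snd (w ss))). lra. }
    destruct hc1 as [Hc _].
    assert (C3 : snd (w ss) - p1 c1 (fst (w ss)) <= 0).
    { apply (closed_gen (fun a b => b - p1 c1 a) (1 + c1) ss (fun s => fst (w s)) (fun s => snd (w s)) _ _ hs ltac:(lra) Dv Dp).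
      intros r Hr. destruct (HA r Hr) as [_ [? ?]]. simpl. lra.
      intros r Hr. simpl. rewrite !p1_eq.
      replace (snd (w r) - (1 + c1 * Rmax 0 (fst (w r) - 1)) - (snd (w ss) - (1 + c1 * Rmax 0 (fst (w ss) - 1))))
        with ((snd (w r) - snd (w ss)) - c1 * (Rmax 0 (fst (w r) - 1) - Rmax 0 (fst (w ss) - 1))) by ring.
      eapply Rle_trans. apply Rabs_triang. rewrite Rabs_Ropp, Rabs_mult, (Rabs_right c1) by lra.
      pose proof (Rmax_lip (fst (w r) - 1) (fst (w ss) - 1)).
      replace (fst (w r) - 1 - (fst (w ss) - 1)) with (fst (w r) - fst (w ss)) in H by ring.
      pose proof (Rabs_pos (snd (w r) - snd (w ss))). pose proof (Rabs_pos (fst (w r) - fst (w ss))). nra. }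
    assert (Hvs : mm <= fst (w ss)) by lra.
    assert (C4 : p2 c1 (fst (w ss)) - snd (w ss) <= 0).
    { apply (closed_gen (fun a b => p2 c1 a - b) (1 + c1 / (mm * mm)) ss (fun s => fst (w s)) (fun s => snd (w s)) _ _ hs
        ltac:(assert (0 < c1 / (mm * mm)) by (apply Rdiv_lt_0_compat; nra); lra) Dv Dp).
      intros r Hr. destruct (HA r Hr) as [_ [? ?]]. simpl. lra.
      intros r Hr. simpl. destruct (HA r Hr) as [[Hr1 _] _].
      rewrite !p2_eq by lra.
      replace (-1 - c1 * Rmax 0 (/ fst (w r) - 1) - snd (w r) - (-1 - c1 * Rmax 0 (/ fst (w ss) - 1) - snd (w ss)))
        with (- (snd (w r) - snd (w ss)) - c1 * (Rmax 0 (/ fst (w r) - 1) - Rmax 0 (/ fst (w ss) - 1))) by ring.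
      eapply Rle_trans. apply Rabs_triang. rewrite Rabs_Ropp, Rabs_Ropp, Rabs_mult, (Rabs_right c1) by lra.
      pose proof (Rmax_lip (/ fst (w r) - 1) (/ fst (w ss) - 1)).
      replace (/ fst (w r) - 1 - (/ fst (w ss) - 1)) with (/ fst (w r) - / fst (w ss)) in H by ring.
      assert (Rabs (/ fst (w r) - / fst (w ss)) <= Rabs (fst (w r) - fst (w ss)) / (mm * mm)).
      { replace (/ fst (w r) - / fst (w ss)) with ((fst (w ss) - fst (w r)) / (fst (w r) * fst (w ss))) by (field; lra).
        unfold Rdiv. rewrite Rabs_mult, Rabs_minus_sym, (Rabs_right (/ (fst (w r) * fst (w ss)))).
        2: apply Rle_ge; left; apply Rinv_0_lt_compat; nra.
        apply Rmult_le_compat_l. apply Rabs_pos. apply Rinv_le_contravar; nra. }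
      pose proof (Rabs_pos (snd (w r) - snd (w ss))). pose proof (Rabs_pos (fst (w r) - fst (w ss))).
      assert (c1 * Rabs (Rmax 0 (/ fst (w r) - 1) - Rmax 0 (/ fst (w ss) - 1)) <=
              c1 / (mm * mm) * Rabs (fst (w r) - fst (w ss))).
      { apply Rle_trans with (c1 * (Rabs (fst (w r) - fst (w ss)) / (mm * mm))).
        apply Rmult_le_compat_l; lra. right. field. lra. }
      set (k := c1 / (mm * mm)) in *. assert (0 <= k) by (unfold k; apply Rdiv_le_0_compat; nra). assert (0 <= k * Rabs (snd (w r) - snd (w ss))) by (apply Rmult_le_pos; lra). lra. }
    split. lra. split; lra. }
  destruct (local ss Hss0 HB) as [del [Hdel Hev]].
  set (s1 := ss + Rmin del 1 / 2).
  pose proof (Rmin_l del 1). pose proof (Rmin_r del 1). assert (0 < Rmin del 1) by (apply Rmin_pos; lra).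
  destruct (Rle_dec s1 t) as [h|h].
  - assert (E s1).
    { split. unfold s1 in *; lra. intros r Hr.
      destruct (Rtotal_order r ss) as [h1|[h1|h1]].
      apply HA; lra. subst; auto. apply Hev. unfold s1 in *; lra. }
    specialize (Hub s1 H2). unfold s1 in *; lra.
  - destruct (Rle_lt_or_eq_dec ss t HssT) as [h1|h1].
    + apply HnK. apply Hev. unfold s1 in *; lra.
    + apply HnK. rewrite <- h1. auto.
Qed.

Definition kappa := Rmin mm (/ MM).

Lemma kappa_bd a b : inK a b -> b * Rf a - Qf a <= - kappa.
Proof.
  intros [[Ha1 Ha2] [Hb1 Hb2]]. pose proof mm_facts as [Hm0 [Hm1 [Hm2 [HM1 HM2]]]].
  assert (Hapos : 0 < a) by lra.
  rewrite p1_eq in Hb2. rewrite p2_eq in Hb1 by lra. destruct hc1 as [Hc _].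
  assert (Hk1 : kappa <= mm) by apply Rmin_l. assert (Hk2 : kappa <= / MM) by apply Rmin_r.
  assert (Hk3 : / MM <= 1/2). { replace (1/2) with (/ 2) by field. apply Rinv_le_contravar; lra. }
  assert (HQ : 1 <= Qf a).
  { unfold Qf. assert (0 <= a * a + 1 - 2 * a) by (pose proof (pow2_ge_0 (a - 1)); nra).
    replace (/ 2 * (/ a + a)) with ((a * a + 1) / (2 * a)) by (field; lra).
    apply Rmult_le_reg_r with (2 * a). lra. replace ((a * a + 1) / (2 * a) * (2 * a)) with (a * a + 1) by (field; lra). lra. }
  assert (ERQ : Rf a - Qf a = - a) by (unfold Rf, Qf; field; lra).
  assert (ERQ2 : - Rf a - Qf a = - / a) by (unfold Rf, Qf; field; lra).
  destruct (Rle_dec a 1) as [h|h].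
  - rewrite Rmax_left in Hb2 by lra.
    assert (0 <= Rf a). { unfold Rf. assert (1 <= / a). { rewrite <- Rinv_1. apply Rinv_le_contravar; lra. } lra. }
    destruct (Rle_dec 0 b). nra. nra.
  - assert (Rf a < 0). { unfold Rf. assert (/ a < 1). { rewrite <- Rinv_1. apply Rinv_lt_contravar; lra. } nra. }
    assert (/ a < 1). { rewrite <- Rinv_1. apply Rinv_lt_contravar; lra. }
    rewrite Rmax_left in Hb1 by lra.
    destruct (Rle_dec 0 b). nra.
    assert (/ MM <= / a) by (apply Rinv_le_contravar; lra). nra.
Qed.

Lemma decay t : 0 <= t -> (snd (w t))^2 * exp (2 * kappa * t) <= p0 ^ 2.
Proof.
  intros Ht. destruct (Rle_lt_or_eq_dec 0 t Ht) as [h|h].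
  2:{ rewrite <- h, Rmult_0_r, exp_0, Rmult_1_r, Hw0. simpl. lra. }
  set (hh := fun s => snd (w s) * snd (w s) * exp (2 * kappa * s)).
  set (hd := fun s => (g2 (w s) * snd (w s) + snd (w s) * g2 (w s)) * exp (2 * kappa * s)
                       + snd (w s) * snd (w s) * (2 * kappa * exp (2 * kappa * s))).
  assert (Hd : forall c, 0 <= c -> is_derive hh c (hd c)).
  { intros c Hc.
    assert (D1 := is_derive_mult (K:=R_AbsRing) _ _ c _ _ (der_p c Hc) (der_p c Hc) Rmult_comm).
    assert (D2 : is_derive (fun s => exp (2 * kappa * s)) c (2 * kappa * exp (2 * kappa * c))).
    { auto_derive; auto. ring. }
    assert (D3 := is_derive_mult (K:=R_AbsRing) _ _ c _ _ D1 D2 Rmult_comm).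
    unfold hh, hd. exact D3. }
  destruct (MVT_cor2 hh hd 0 t h) as [c0 [Hmvt Hc0]].
  { intros c Hc. apply is_derive_Reals. apply Hd. lra. }
  assert (Hneg : hd c0 <= 0).
  { unfold hd. pose proof (invariance c0 ltac:(lra)) as HK.
    pose proof (kappa_bd _ _ HK) as Hk.
    rewrite (surjective_pairing (w c0)). destruct (g_K _ _ HK) as [_ E2]. rewrite E2.
    unfold rhs_p. set (b := snd (w c0)) in *. set (q := b * Rf (fst (w c0)) - Qf (fst (w c0))) in *.
    pose proof (exp_pos (2 * kappa * c0)). 
    assert (b * b * (q + kappa) <= 0) by (assert (0 <= b * b) by nra; nra).
    cbn [snd]. nra. }
  unfold hh in Hmvt. rewrite Rmult_0_r, exp_0, Rmult_1_r, Hw0 in Hmvt. simpl in Hmvt.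
  simpl. assert (hd c0 * (t - 0) <= 0) by nra. nra.
Qed.

Lemma kappa_pos : 0 < kappa.
Proof. pose proof mm_facts. unfold kappa. apply Rmin_glb_lt. lra. apply Rinv_0_lt_compat; lra. Qed.

Lemma p_lim : is_lim (fun t => snd (w t)) p_infty 0.
Proof.
  apply is_lim_spec. intros eps. simpl.
  pose proof kappa_pos as Hk. pose proof (cond_pos eps) as He.
  set (e := pos eps) in *.
  assert (He2 : 0 < e * e * (2 * kappa)) by (apply Rmult_lt_0_compat; [apply Rmult_lt_0_compat|]; lra).
  exists (p0 ^ 2 / (e * e * (2 * kappa))). intros x Hx.
  assert (0 <= p0 ^ 2 / (e * e * (2 * kappa))).
  { apply Rdiv_le_0_compat. apply pow2_ge_0. exact He2. }
  pose proof (decay x ltac:(lra)) as D.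
  pose proof (exp_ineq1_le (2 * kappa * x)).
  assert (H2 : p0 ^ 2 < e * e * (2 * kappa * x)).
  { apply Rmult_lt_compat_l with (r := e * e * (2 * kappa)) in Hx; [|exact He2].
    replace (e * e * (2 * kappa) * (p0 ^ 2 / (e * e * (2 * kappa)))) with (p0 ^ 2) in Hx by (field; lra).
    replace (e * e * (2 * kappa * x)) with (e * e * (2 * kappa) * x) by ring. exact Hx. }
  assert (H3 : e * e * (2 * kappa * x) <= e * e * exp (2 * kappa * x)).
  { apply Rmult_le_compat_l. nra. lra. }
  assert (H4 : snd (w x) ^ 2 < e * e).
  { pose proof (exp_pos (2 * kappa * x)). apply Rmult_lt_reg_r with (exp (2 * kappa * x)); auto. lra. }
  rewrite Rminus_0_r. apply Rabs_def1; nra.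
Qed.

End Sol.

End Main.

Theorem theorem3p8 (c1 : R) (hc1 : 0 < c1 < (3 + sqrt 73) / 8)
  (v0 p0 : R) (h0 : Omega c1 v0 p0) :
  exists v p : R -> R,
    v 0 = v0 /\ p 0 = p0 /\
    (* right-continuity at the initial time *)
    filterlim v (at_right 0) (locally v0) /\
    filterlim p (at_right 0) (locally p0) /\
    (* the ODE holds for all t > 0 *)
    (forall t, 0 < t ->
       is_derive p t (rhs_p (v t) (p t)) /\
       is_derive v t (rhs_v (v t) (p t))) /\
    (* invariance of Omega *)
    (forall t, 0 < t -> Omega c1 (v t) (p t)) /\
    (* v_c bounded away from 0 and infinity *)
    (exists m M, 0 < m /\ forall t, 0 <= t -> m <= v t <= M) /\
    (* p(t) -> 0 as t -> infinity *)
    is_lim p p_infty 0.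
Proof.
  destruct (sol_exists c1 v0 p0 hc1 h0) as [w [Hw0 Hder]].
  pose proof (invariance c1 v0 p0 hc1 h0 w Hw0 Hder) as Hinv.
  pose proof (mm_facts c1 v0 p0 h0) as [Hm0 [Hm1 [Hm2 [HM1 HM2]]]].
  exists (fun t => fst (w t)), (fun t => snd (w t)).
  split. rewrite Hw0; auto. split. rewrite Hw0; auto.
  split.
  { destruct (Hder 0 (Rle_refl 0)) as [Dv _].
    pose proof (ex_derive_continuous (K:=R_AbsRing) (V:=R_NormedModule) _ _ (ex_intro _ _ Dv)) as Hc.
    eapply filterlim_filter_le_1. apply filter_le_within. replace v0 with (fst (w 0)) by (rewrite Hw0; auto). exact Hc. }
  split.
  { destruct (Hder 0 (Rle_refl 0)) as [_ Dp].
    pose proof (ex_derive_continuous (K:=R_AbsRing) (V:=R_NormedModule) _ _ (ex_intro _ _ Dp)) as Hc.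
    eapply filterlim_filter_le_1. apply filter_le_within. replace p0 with (snd (w 0)) by (rewrite Hw0; auto). exact Hc. }
  split.
  { intros t Ht. destruct (Hder t ltac:(lra)) as [Dv Dp].
    pose proof (Hinv t ltac:(lra)) as HK.
    destruct (g_K c1 v0 p0 hc1 h0 _ _ HK) as [E1 E2].
    rewrite <- surjective_pairing in E1, E2. rewrite E1 in Dv. rewrite E2 in Dp. split; auto. }
  split.
  { intros t Ht. destruct (Hinv t ltac:(lra)) as [[H1 H2] [H3 H4]]. split; [lra|]. split; auto. }
  split.
  { exists (mm v0), (MM v0). split; auto. intros t Ht. destruct (Hinv t Ht) as [H _]. exact H. }
  apply (p_lim c1 v0 p0 hc1 h0 w Hw0 Hder).
Qed.
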